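(* Assume $\inf_{x\in X}\mu(B_x(1/2))>0$, and let $Z\subset X$ and $N:\mathbb{R}\to\mathbb{N}$ be such that $X=\bigcup_{z\in Z}B_z(1)$ and, for every $x\in X$ and $r\ge1$, the number of $z\in Z$ with $B_z(r)\cap B_x(r)\neq\emptyset$ is at most $N(r)$. Then for every controlled operator $T\in\mathscr{B}(X)$, $$\|T\|\le N(d(T)+1)^{1/2}\sup_{x\in X}\|\mathbf{1}_{B_x(1)}T\|.$$
   Context: $(X,d)$ is a non-compact proper metric space, $B_x(r)=\{y:d(x,y)\le r\}$, and $\mu$ is a Radon measure with support $X$ such that $\mu(B_x(r))>0$ and $\sup_x\mu(B_x(r))<\infty$ for all $r>0$. $\mathscr{B}(X)$ is the algebra of bounded operators on $L^2(X,\mu)$; $\mathbf{1}_A$ is multiplication by the characteristic function of measurable $A$. $T$ is controlled if there is $r>0$ such that $\mathbf{1}_FT\mathbf{1}_G=0$ for all closed $F,G$ with $d(F,G)>r$; $d(T)$ is the smallest such $r$. *)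

(* Defs.v *)
From HB Require Import structures.
From mathcomp Require Import all_boot all_order all_algebra.
From mathcomp Require Import all_classical all_reals all_analysis.
From mathcomp Require Import complex.

Set Implicit Arguments.
Unset Strict Implicit.
Unset Printing Implicit Defensive.

Import Order.TTheory GRing.Theory Num.Theory.
Local Open Scope classical_set_scope.
Local Open Scope ring_scope.

Section Defs.
Context (R : realType) (M : metricType R) (x0 : M).

(* The carrier of M, made pointed (needed to build the generated sigma-algebra). *)
Definition pM : Type := M.
HB.instance Definition _ := Choice.on pM.
HB.instance Definition _ := isPointed.Build pM x0.

Definition Borel : measurableType _ :=
  g_sigma_algebraType (@open M : set (set pM)).

Definition cball (x : M) (r : R) : set M := [set y | mdist x y <= r].

Definition proper_space : Prop := forall (x : M) (r : R), compact (cball x r).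

(* d(F,G) > r, where d(F,G) = inf {d(x,y) : x in F, y in G} (= +oo if F or G is empty) *)
Definition dist_gt (F G : set M) (r : R) : Prop :=
  exists s : R, r < s /\ forall x y, F x -> G y -> s <= mdist x y.

Context (mu : {measure set Borel -> \bar R}).

Definition radon : Prop :=
  [/\ (forall K : set M, compact K -> (mu K < +oo)%E),
      (forall A : set Borel, measurable A ->
         mu A = ereal_inf [set mu U | U in [set U : set M | open U /\ A `<=` U]]) &
      (forall U : set M, open U ->
         mu U = ereal_sup [set mu K | K in [set K : set M | compact K /\ K `<=` U]])].

Definition full_support : Prop :=
  forall U : set M, open U -> U !=set0 -> (0 < mu U)%E.

Definition sqnormC (z : R[i]) : R := complex.Re z ^+ 2 + complex.Im z ^+ 2.

Definition L2 (f : Borel -> R[i]) : Prop :=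
  [/\ measurable_fun setT (fun x => complex.Re (f x)),
      measurable_fun setT (fun x => complex.Im (f x)) &
      (\int[mu]_x (sqnormC (f x))%:E < +oo)%E].

Definition esqrt (e : \bar R) : \bar R :=
  match e with
  | r%:E => (Num.sqrt r)%:E
  | +oo%E => +oo%E
  | -oo%E => 0%E
  end.

Definition norm2 (f : Borel -> R[i]) : \bar R :=
  esqrt (\int[mu]_x (sqnormC (f x))%:E).

Definition ae_eq (f g : Borel -> R[i]) : Prop := {ae mu, forall x, f x = g x}.

Definition mul_ind (A : set M) (f : Borel -> R[i]) : Borel -> R[i] :=
  fun x => (\1_A x : R[i]) * f x.

(* A bounded operator on L^2(X,mu), represented by a map on representatives:
   it preserves L^2, is linear and compatible with a.e. equality on L^2, and bounded. *)
Definition bounded_op (T : (Borel -> R[i]) -> (Borel -> R[i])) : Prop :=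
  [/\ (forall f, L2 f -> L2 (T f)),
      (forall (a : R[i]) f g, L2 f -> L2 g ->
         ae_eq (T (fun x => a * f x + g x)) (fun x => a * T f x + T g x)),
      (forall f g, L2 f -> L2 g -> ae_eq f g -> ae_eq (T f) (T g)) &
      (exists C : R, forall f, L2 f -> (norm2 (T f) <= C%:E * norm2 f)%E)].

Definition opnorm (S : (Borel -> R[i]) -> (Borel -> R[i])) : \bar R :=
  ereal_sup [set norm2 (S f) | f in [set f | L2 f /\ (norm2 f <= 1)%E]].

Definition controlled_by (T : (Borel -> R[i]) -> (Borel -> R[i])) (r : R) : Prop :=
  forall F G : set M, closed F -> closed G -> dist_gt F G r ->
  forall f, L2 f -> ae_eq (mul_ind F (T (mul_ind G f))) (fun _ => 0).

Definition controlled (T : (Borel -> R[i]) -> (Borel -> R[i])) : Prop :=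
  exists r : R, 0 < r /\ controlled_by T r.

Definition prop_d (T : (Borel -> R[i]) -> (Borel -> R[i])) : R :=
  inf [set r : R | 0 < r /\ controlled_by T r].

End Defs.

(* Main.v *)
Require Import Defs.
From HB Require Import structures.
From mathcomp Require Import all_boot all_order all_algebra.
From mathcomp Require Import all_classical all_reals all_analysis.
From mathcomp Require Import complex.
From mathcomp Require Import measurable_realfun.
From mathcomp Require Import ring lra.
Import Order.TTheory GRing.Theory Num.Theory.
Local Open Scope classical_set_scope.
Local Open Scope ring_scope.

Module H1.
Unset Implicit Arguments.
Set Strict Implicit.

Lemma ReM_ (R : realType) (a b : R[i]) :
  complex.Re (a * b) = complex.Re a * complex.Re b - complex.Im a * complex.Im b.
Proof. by case: a => ar ai; case: b => br bi. Qed.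
Lemma ImM_ (R : realType) (a b : R[i]) :
  complex.Im (a * b) = complex.Re a * complex.Im b + complex.Im a * complex.Re b.
Proof. by case: a => ar ai; case: b => br bi. Qed.
Lemma ReD_ (R : realType) (a b : R[i]) :
  complex.Re (a + b) = complex.Re a + complex.Re b.
Proof. by case: a => ar ai; case: b => br bi. Qed.
Lemma ImD_ (R : realType) (a b : R[i]) :
  complex.Im (a + b) = complex.Im a + complex.Im b.
Proof. by case: a => ar ai; case: b => br bi. Qed.
Lemma sqnormC_ge0 (R : realType) (a : R[i]) : 0 <= sqnormC a.
Proof. by rewrite /sqnormC addr_ge0 // sqr_ge0. Qed.
Lemma sqnormCM (R : realType) (a b : R[i]) : sqnormC (a * b) = sqnormC a * sqnormC b.
Proof. rewrite /sqnormC ReM_ ImM_. ring. Qed.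
Lemma sqnormC0 (R : realType) : sqnormC (0 : R[i]) = 0.
Proof. by rewrite /sqnormC /= expr0n /= addr0. Qed.
Lemma Re0_ (R : realType) : complex.Re (0 : R[i]) = 0. Proof. by []. Qed.
Lemma Im0_ (R : realType) : complex.Im (0 : R[i]) = 0. Proof. by []. Qed.
Lemma ReR_ (R : realType) (r : R) : complex.Re (Complex r 0 : R[i]) = r. Proof. by []. Qed.
Lemma ImR_ (R : realType) (r : R) : complex.Im (Complex r 0 : R[i]) = 0. Proof. by []. Qed.
Lemma sqnormCR (R : realType) (r : R) : sqnormC (Complex r 0) = r ^+ 2.
Proof. by rewrite /sqnormC ReR_ ImR_ expr0n /= addr0. Qed.
Lemma indic_cplx (R : realType) (T : Type) (A : set T) x :
  (\1_A x : R[i]) = Complex (\1_A x : R) 0.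
Proof. by rewrite !indicE; case: (x \in A). Qed.

End H1.
Import H1.

Module H2.
Unset Implicit Arguments.
Set Strict Implicit.
Set Implicit Arguments.
Unset Strict Implicit.

Section Topo.
Context (R : realType) (M : metricType R).

Lemma mball_open (z : M) r : open (ball z r).
Proof.
rewrite openE => y; rewrite ballEmdist /= => hy.
apply: (@filterS _ _ _ (ball y (r - mdist z y))); last first.
  by apply: nbhsx_ballx; rewrite subr_gt0.
move=> w; rewrite !ballEmdist /= => hw.
have := metric_triangle z y w; lra.
Qed.

Lemma cball_closed (z : M) r : closed (cball z r).
Proof.
rewrite -[cball z r]setCK closedC openE => y hy.
have hy' : r < mdist z y by rewrite ltNge; apply/negP.
apply: (@filterS _ _ _ (ball y (mdist z y - r))); last first.
  by apply: nbhsx_ballx; rewrite subr_gt0.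
move=> w; rewrite !ballEmdist /= => hw hc; rewrite /cball /= in hc.
have := metric_triangle z w y; rewrite (metric_sym w y); lra.
Qed.

Lemma cball_ball_closed (z : M) r : closed (~` ball z r).
Proof. by apply: open_closedC; apply: mball_open. Qed.
End Topo.

End H2.
Import H2.

Module H3.
Unset Implicit Arguments.
Set Strict Implicit.
Set Implicit Arguments.
Unset Strict Implicit.

Section S.
Context (R : realType) (M : metricType R) (x0 : M)
  (mu : {measure set (Borel x0) -> \bar R}).
Local Notation B := (Borel x0).
Local Notation mi := (@mul_ind R M x0).
Implicit Types f g : B -> R[i].

Definition sqf (f : B -> R[i]) : B -> \bar R := fun x => (sqnormC (f x))%:E.
Definition Ii (f : B -> R[i]) := (\int[mu]_x sqf f x)%E.

Lemma open_meas (A : set M) : open A -> measurable (A : set B).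
Proof. by move=> oA; apply: sub_sigma_algebra. Qed.

Lemma closed_meas (A : set M) : closed A -> measurable (A : set B).
Proof.
move=> cA; rewrite -[A]setCK; apply: measurableC; apply: open_meas.
by rewrite -closedC setCK.
Qed.

Lemma ball_meas (z : M) r : measurable (ball z r : set B).
Proof. by apply: open_meas; apply: mball_open. Qed.
Lemma cball_meas (z : M) r : measurable (cball z r : set B).
Proof. by apply: closed_meas; apply: cball_closed. Qed.

Lemma meas_sqf (f : B -> R[i]) :
  measurable_fun setT (fun x => complex.Re (f x)) ->
  measurable_fun setT (fun x => complex.Im (f x)) ->
  measurable_fun setT (sqf f).
Proof.
move=> h1 h2; apply/measurable_EFinP.
by apply: measurable_funD; apply: measurable_funX.
Qed.

Lemma L2_meas f : L2 mu f -> measurable_fun setT (sqf f).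
Proof. by case=> h1 h2 _; apply: meas_sqf. Qed.

Lemma sqf_ge0 f x : (0 <= sqf f x)%E.
Proof. by rewrite lee_fin sqnormC_ge0. Qed.

Lemma Ii_ge0 f : (0 <= Ii f)%E.
Proof. by apply: integral_ge0 => x _; apply: sqf_ge0. Qed.

Lemma L2_fin f : L2 mu f -> Ii f = (fine (Ii f))%:E.
Proof. by case=> _ _ h; rewrite fineK // ge0_fin_numE // Ii_ge0. Qed.

Lemma L2_fine_ge0 f : (0 <= fine (Ii f)).
Proof. by apply: fine_ge0; apply: Ii_ge0. Qed.

Lemma Re_ind (A : set M) f x :
  complex.Re (mi A f x) = (\1_A x : R) * complex.Re (f x).
Proof. by rewrite /mul_ind indic_cplx ReM_ /= mul0r subr0. Qed.
Lemma Im_ind (A : set M) f x :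
  complex.Im (mi A f x) = (\1_A x : R) * complex.Im (f x).
Proof. by rewrite /mul_ind indic_cplx ImM_ /= mul0r addr0. Qed.

Lemma sqnorm_ind (A : set M) f x :
  sqnormC (mi A f x) = (\1_A x : R) * sqnormC (f x).
Proof.
rewrite /mul_ind sqnormCM indic_cplx sqnormCR; congr (_ * _).
by rewrite indicE; case: (x \in A); rewrite ?expr1n ?expr0n.
Qed.

Lemma L2_ind (A : set M) f : measurable (A : set B) -> L2 mu f -> L2 mu (mi A f).
Proof.
move=> mA [h1 h2 h3]; split.
- rewrite (_ : (fun x => _) = (\1_A : B -> R) \* (fun x => complex.Re (f x))).
    by apply: measurable_funM => //; apply: measurable_indic.
  by apply/funext => x; rewrite Re_ind.
- rewrite (_ : (fun x => _) = (\1_A : B -> R) \* (fun x => complex.Im (f x))).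
    by apply: measurable_funM => //; apply: measurable_indic.
  by apply/funext => x; rewrite Im_ind.
apply: le_lt_trans h3; apply: ge0_le_integral => //.
- by move=> x _; rewrite lee_fin sqnormC_ge0.
- apply: meas_sqf.
  + rewrite (_ : (fun x => _) = (\1_A : B -> R) \* (fun x => complex.Re (f x))).
      by apply: measurable_funM => //; apply: measurable_indic.
    by apply/funext => x; rewrite Re_ind.
  + rewrite (_ : (fun x => _) = (\1_A : B -> R) \* (fun x => complex.Im (f x))).
      by apply: measurable_funM => //; apply: measurable_indic.
    by apply/funext => x; rewrite Im_ind.
- by apply: meas_sqf.
move=> x _; rewrite lee_fin sqnorm_ind indicE.
by case: (x \in A); rewrite ?mul1r ?mul0r ?sqnormC_ge0.
Qed.
End S.

End H3.
Import H3.

Module H4.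
Unset Implicit Arguments.
Set Strict Implicit.
Set Implicit Arguments.
Unset Strict Implicit.

Section S.
Context (R : realType) (M : metricType R) (x0 : M)
  (mu : {measure set (Borel x0) -> \bar R}).
Local Notation B := (Borel x0).
Local Notation mi := (@mul_ind R M x0).
Local Notation L2 := (@L2 R M x0 mu).
Local Notation Ii := (@Ii R M x0 mu).
Local Notation sqf := (@sqf R M x0).
Local Notation aeq := (@Defs.ae_eq R M x0 mu).
Implicit Types f g : B -> R[i].

Definition MRI f := measurable_fun setT (fun x => complex.Re (f x)) /\
  measurable_fun setT (fun x => complex.Im (f x)).

Lemma L2_MRI f : L2 f -> MRI f.
Proof. by case. Qed.

Lemma MRI_scale (a : R[i]) f : MRI f -> MRI (fun x => a * f x).
Proof.
move=> [h1 h2]; split.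
- rewrite (_ : (fun x => _) = (fun x => complex.Re a * complex.Re (f x) -
     complex.Im a * complex.Im (f x))); last by apply/funext => x; rewrite ReM_.
  apply: measurable_funB; apply: measurable_funM => //.
- rewrite (_ : (fun x => _) = (fun x => complex.Re a * complex.Im (f x) +
     complex.Im a * complex.Re (f x))); last by apply/funext => x; rewrite ImM_.
  apply: measurable_funD; apply: measurable_funM => //.
Qed.

Lemma MRI_add f g : MRI f -> MRI g -> MRI (fun x => f x + g x).
Proof.
move=> [h1 h2] [h3 h4]; split.
- rewrite (_ : (fun x => _) = (fun x => complex.Re (f x) + complex.Re (g x)));
    last by apply/funext => x; rewrite ReD_.
  exact: measurable_funD.
- rewrite (_ : (fun x => _) = (fun x => complex.Im (f x) + complex.Im (g x)));
    last by apply/funext => x; rewrite ImD_.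
  exact: measurable_funD.
Qed.

Lemma MRI_0 : MRI (fun _ => 0).
Proof. by split => /=; apply: measurable_cst. Qed.

Lemma MRI_ind (A : set M) f : measurable (A : set B) -> MRI f -> MRI (mi A f).
Proof.
move=> mA [h1 h2]; split.
- rewrite (_ : (fun x => _) = (\1_A : B -> R) \* (fun x => complex.Re (f x))).
    by apply: measurable_funM => //; apply: measurable_indic.
  by apply/funext => x; rewrite Re_ind.
- rewrite (_ : (fun x => _) = (\1_A : B -> R) \* (fun x => complex.Im (f x))).
    by apply: measurable_funM => //; apply: measurable_indic.
  by apply/funext => x; rewrite Im_ind.
Qed.

Lemma MRI_sqf f : MRI f -> measurable_fun setT (sqf f).
Proof. by case=> h1 h2; apply: meas_sqf. Qed.

Lemma Ii_scale (a : R[i]) f : MRI f -> Ii (fun x => a * f x) = ((sqnormC a)%:E * Ii f)%E.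
Proof.
move=> hf; rewrite /H3.Ii -ge0_integralZl_EFin //.
- by apply: eq_integral => x _; rewrite /H3.sqf sqnormCM EFinM.
- by move=> x _; apply: sqf_ge0.
- exact: MRI_sqf.
- exact: sqnormC_ge0.
Qed.

Lemma L2_0 : L2 (fun _ => 0).
Proof.
split; try by apply: measurable_cst.
rewrite /H3.Ii (_ : (fun x => _) = (fun _ => 0%E)); last first.
  by apply/funext => x; rewrite sqnormC0.
by rewrite integral0 ltry.
Qed.

Lemma L2_scale (a : R[i]) f : L2 f -> L2 (fun x => a * f x + 0).
Proof.
move=> hf; have [h1 h2] := MRI_scale a (L2_MRI hf).
have e : (fun x => a * f x + 0) = (fun x => a * f x) by apply/funext => x; rewrite addr0.
rewrite e; split => //.
change (Ii (fun x => a * f x)%R < +oo)%E.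
rewrite Ii_scale; last exact: L2_MRI.
rewrite (L2_fin hf).
by rewrite -EFinM ltry.
Qed.

Lemma aeq_refl f : aeq f f.
Proof. by apply: nearW. Qed.

Lemma aeq_sym f g : aeq f g -> aeq g f.
Proof. by apply: filterS => x ->. Qed.

Lemma aeq_trans f g h : aeq f g -> aeq g h -> aeq f h.
Proof. by apply: filterS2 => x -> ->. Qed.

Lemma aeq_map1 (F : B -> R[i] -> R[i]) f g : aeq f g ->
  aeq (fun x => F x (f x)) (fun x => F x (g x)).
Proof. by apply: filterS => x ->. Qed.

Lemma aeq_map2 (F : B -> R[i] -> R[i] -> R[i]) f1 f2 g1 g2 : aeq f1 g1 -> aeq f2 g2 ->
  aeq (fun x => F x (f1 x) (f2 x)) (fun x => F x (g1 x) (g2 x)).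
Proof. by apply: filterS2 => x -> ->. Qed.

Lemma Ii_aeq f g : MRI f -> MRI g -> aeq f g -> Ii f = Ii g.
Proof.
move=> hf hg e; apply: ae_eq_integral => //.
- exact: MRI_sqf.
- exact: MRI_sqf.
by move: e; apply: filterS => x ex _; rewrite /H3.sqf ex.
Qed.
End S.

End H4.
Import H4.

Module H5.
Unset Implicit Arguments.
Set Strict Implicit.
Set Implicit Arguments.
Unset Strict Implicit.

Section S.
Context (R : realType) (M : metricType R) (x0 : M)
  (mu : {measure set (Borel x0) -> \bar R}).
Local Notation B := (Borel x0).
Local Notation mi := (@mul_ind R M x0).
Local Notation L2 := (@L2 R M x0 mu).
Local Notation Ii := (@Ii R M x0 mu).
Local Notation sqf := (@sqf R M x0).
Local Notation aeq := (@Defs.ae_eq R M x0 mu).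
Implicit Types f g : B -> R[i].
Context (T : (B -> R[i]) -> (B -> R[i])) (HT : bounded_op mu T).

Lemma LT f : L2 f -> L2 (T f).
Proof. by case: HT => h _ _ _; apply: h. Qed.

Lemma Tlin (a : R[i]) f g : L2 f -> L2 g ->
  aeq (T (fun x => a * f x + g x)) (fun x => a * T f x + T g x).
Proof. by case: HT => _ h _ _; apply: h. Qed.

Lemma T0 : aeq (T (fun _ => 0)) (fun _ => 0).
Proof.
have := Tlin (-1) (@L2_0 _ _ _ mu) (@L2_0 _ _ _ mu).
have -> : (fun x : B => -1 * (0 : R[i]) + 0) = (fun _ => 0).
  by apply/funext => x; rewrite mulr0 addr0.
have -> : (fun x : B => -1 * T (fun _ => 0) x + T (fun _ => 0) x) = (fun _ => 0).
  by apply/funext => x; rewrite mulN1r addNr.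
by [].
Qed.

Lemma Tscale (a : R[i]) f : L2 f ->
  aeq (T (fun x => a * f x + 0)) (fun x => a * T f x).
Proof.
move=> hf; apply: aeq_trans (Tlin a hf (@L2_0 _ _ _ mu)) _.
have := aeq_map2 (fun x u v => a * T f x + v) (aeq_refl mu (T f)) T0.
by rewrite /=; apply: filterS => x ->; rewrite addr0.
Qed.

Lemma Tsplit (U : set M) f : measurable (U : set B) -> L2 f ->
  aeq (T f) (fun x => T (mi U f) x + T (mi (~` U) f) x).
Proof.
move=> mU hf.
have := Tlin 1 (L2_ind mU hf) (L2_ind (measurableC mU) hf).
have -> : (fun x => 1 * mi U f x + mi (~` U) f x) = f.
  apply/funext => x; rewrite /mul_ind !indicE in_setC mul1r.
  by case: (x \in U) => /=; rewrite ?mul1r ?mul0r ?addr0 ?add0r.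
by apply: filterS => x ->; rewrite mul1r.
Qed.
End S.

End H5.
Import H5.

Module H6.
Unset Implicit Arguments.
Set Strict Implicit.
Set Implicit Arguments.
Unset Strict Implicit.

Section S.
Context (R : realType) (M : metricType R) (x0 : M)
  (mu : {measure set (Borel x0) -> \bar R}).
Local Notation B := (Borel x0).
Local Notation mi := (@mul_ind R M x0).
Local Notation L2 := (@L2 R M x0 mu).
Local Notation Ii := (@Ii R M x0 mu).
Local Notation sqf := (@sqf R M x0).
Local Notation aeq := (@Defs.ae_eq R M x0 mu).
Implicit Types f g : B -> R[i].

Lemma normK g : L2 g -> norm2 mu g = (Num.sqrt (fine (Ii g)))%:E.
Proof. by move=> hg; rewrite /norm2; change (esqrt (Ii g) = (Num.sqrt (fine (Ii g)))%:E); rewrite (L2_fin hg). Qed.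

Lemma fine_Ii_scale (a : R[i]) g : MRI g -> L2 g ->
  fine (Ii (fun x => a * g x)) = sqnormC a * fine (Ii g).
Proof. by move=> hm hg; rewrite Ii_scale // (L2_fin hg) -EFinM. Qed.

Context (T : (B -> R[i]) -> (B -> R[i])) (HT : bounded_op mu T).

Lemma Kbound (A : set M) (s0 : R) : measurable (A : set B) -> 0 <= s0 ->
  (forall g, L2 g -> (norm2 mu g <= 1)%E -> (norm2 mu (mi A (T g)) <= s0%:E)%E) ->
  forall g, L2 g -> fine (Ii (mi A (T g))) <= s0 ^+ 2 * fine (Ii g).
Proof.
move=> mA s0ge hS g hg.
set c := fine (Ii g); set w := fine (Ii (mi A (T g))).
have c0 : 0 <= c by apply: L2_fine_ge0.
have hATg : L2 (mi A (T g)) by apply: L2_ind => //; apply: LT.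
have w0 : 0 <= w by apply: L2_fine_ge0.
apply/ler_addgt0Pr => e e0.
set eps := e / (s0 ^+ 2 + 1).
have s21 : 0 < s0 ^+ 2 + 1 by rewrite ltr_wpDl // sqr_ge0.
have eps0 : 0 < eps by rewrite divr_gt0.
set t := Num.sqrt (c + eps).
have t0 : 0 < t by rewrite sqrtr_gt0; lra.
have t2 : t ^+ 2 = c + eps by rewrite sqr_sqrtr //; lra.
set a : R[i] := Complex t^-1 0.
have sa : sqnormC a = t^-1 ^+ 2 by rewrite sqnormCR.
set g' := fun x => a * g x + 0.
have hg' : L2 g' by apply: L2_scale.
have eg' : g' = (fun x => a * g x) by apply/funext => x; rewrite /g' addr0.
have Ig' : fine (Ii g') = t^-1 ^+ 2 * c.
  by rewrite eg' fine_Ii_scale //; [rewrite sa | exact: (L2_MRI hg)].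
have n1 : (norm2 mu g' <= 1)%E.
  rewrite normK // Ig' lee_fin -sqrtr1 ler_sqrt // exprVn.
  rewrite ler_pdivrMl ?exprn_gt0 // mulr1 t2; lra.
have := hS _ hg' n1.
have hATg' : L2 (mi A (T g')) by apply: L2_ind => //; apply: LT.
rewrite normK // lee_fin -[s0 in _ <= s0]ger0_norm // -sqrtr_sqr ler_sqrt ?sqr_ge0 //.
have -> : Ii (mi A (T g')) = Ii (fun x => a * mi A (T g) x).
  apply: Ii_aeq.
  - exact: (L2_MRI hATg').
  - by apply: MRI_scale; apply: (L2_MRI hATg).
  have := aeq_map1 (fun x u => (\1_A x : R[i]) * u) (Tscale HT a hg).
  by apply: filterS => x; rewrite /mul_ind => ->; rewrite mulrCA.
rewrite fine_Ii_scale //; last exact: (L2_MRI hATg).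
rewrite sa -/w => hw.
have : w <= s0 ^+ 2 * t ^+ 2.
  have tp : 0 < t^-1 ^+ 2 by rewrite exprn_gt0 // invr_gt0.
  by rewrite -(ler_pM2l tp) mulrCA -exprMn mulVf ?gt_eqF // expr1n mulr1.
rewrite t2 mulrDr => hw2.
apply: (le_trans hw2); rewrite lerD2l /eps mulrCA ger_pMr //.
rewrite ler_pdivrMr // mul1r; lra.
Qed.
End S.

End H6.
Import H6.

Module H7.
Unset Implicit Arguments.
Set Strict Implicit.
Set Implicit Arguments.
Unset Strict Implicit.

Section S.
Context (R : realType) (M : metricType R) (x0 : M)
  (mu : {measure set (Borel x0) -> \bar R}).
Local Notation B := (Borel x0).
Local Notation mi := (@mul_ind R M x0).
Local Notation L2 := (@L2 R M x0 mu).
Local Notation Ii := (@Ii R M x0 mu).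
Local Notation sqf := (@sqf R M x0).
Local Notation aeq := (@Defs.ae_eq R M x0 mu).
Implicit Types f g : B -> R[i].

Lemma sqf_ind_le (A : set M) f x : (sqf (mi A f) x <= sqf f x)%E.
Proof.
rewrite /H3.sqf lee_fin sqnorm_ind indicE.
by case: (x \in A); rewrite ?mul1r ?mul0r ?sqnormC_ge0.
Qed.

Lemma ball_lim (z : M) (r : R) f : L2 f ->
  (Ii (mi (ball z (r + (n.+1%:R)^-1)) f) @[n --> \oo] --> Ii (mi (cball z r) f))%E.
Proof.
move=> hf.
have := @dominated_convergence _ B R mu setT measurableT
  (fun n => sqf (mi (ball z (r + (n.+1%:R)^-1)) f)) (sqf (mi (cball z r) f)) (sqf f).
case.
- move=> n; apply: MRI_sqf; apply: MRI_ind; first exact: ball_meas.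
  exact: (L2_MRI hf).
- apply: MRI_sqf; apply: MRI_ind; first exact: cball_meas.
  exact: (L2_MRI hf).
- apply: aeW => x _.
  have [hx|hx] := leP (mdist z x) r.
    apply: cvg_near_cst; apply: nearW => n.
    rewrite /H3.sqf /mul_ind !indicE.
    have h1 : cball z r x by [].
    have h2 : ball z (r + (n.+1%:R)^-1) x.
      by rewrite ballEmdist /=; apply: (le_lt_trans hx); rewrite ltrDl invr_gt0.
    by rewrite (mem_set h1) (mem_set h2).
  apply: cvg_near_cst.
  have dp : 0 < mdist z x - r by rewrite subr_gt0.
  move: (near_infty_natSinv_lt (PosNum dp)); apply: filterS => n /= hn.
  rewrite /H3.sqf /mul_ind !indicE.
  have h1 : ~ cball z r x by rewrite /cball /=; lra.
  have h2 : ~ ball z (r + (n.+1%:R)^-1) x.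
    rewrite ballEmdist /= => h; move: hn h.
    set u := (n.+1%:R : R)^-1; set v := mdist z x; lra.
  by rewrite (memNset h1) (memNset h2).
- apply/integrableP; split; first exact: (L2_meas hf).
  rewrite (_ : (fun x => _) = sqf f); last first.
    by apply/funext => x; rewrite gee0_abs // sqf_ge0.
  by case: hf.
- apply: aeW => x n _; rewrite gee0_abs ?sqf_ge0 //.
  exact: sqf_ind_le.
by move=> _ _ h; apply: h.
Qed.
End S.

End H7.
Import H7.

Module H8.
Unset Implicit Arguments.
Set Strict Implicit.
Set Implicit Arguments.
Unset Strict Implicit.

Section S.
Context (R : realType) (M : metricType R) (x0 : M)
  (mu : {measure set (Borel x0) -> \bar R}).
Local Notation B := (Borel x0).
Local Notation mi := (@mul_ind R M x0).
Local Notation L2 := (@L2 R M x0 mu).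
Local Notation Ii := (@Ii R M x0 mu).
Local Notation sqf := (@sqf R M x0).
Local Notation aeq := (@Defs.ae_eq R M x0 mu).
Implicit Types f g : B -> R[i].
Context (T : (B -> R[i]) -> (B -> R[i])) (HT : bounded_op mu T)
  (HTc : controlled mu T).
Local Notation d := (prop_d mu T).

Lemma d_ge0 : 0 <= d.
Proof.
case: HTc => r [r0 hr].
apply: lb_le_inf; first by exists r.
by move=> y [y0 _]; apply: ltW.
Qed.

Lemma ctrl_d : controlled_by mu T d.
Proof.
move=> F G cF cG [s [ds hs]] f hf.
case: HTc => r0 [r00 hr0].
have [r [r0' hr] rs] := @inf_lt _ [set r : R | 0 < r /\ controlled_by mu T r] s
  (ex_intro _ r0 (conj r00 hr0)) ds.
by apply: hr => //; exists s; split.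
Qed.

Lemma local_eq (z : M) (e : R) f : 0 < e -> L2 f ->
  Ii (mi (cball z 1) (T f)) = Ii (mi (cball z 1) (T (mi (ball z ((1 + d) + e)) f))).
Proof.
move=> e0 hf.
have mU : measurable (ball z ((1 + d) + e) : set B) by apply: ball_meas.
have e1 := Tsplit HT mU hf.
have e2 : aeq (mi (cball z 1) (T (mi (~` ball z ((1 + d) + e)) f))) (fun _ => 0).
  apply: ctrl_d => //.
  - exact: cball_closed.
  - exact: cball_ball_closed.
  - exists (d + e); split; first by rewrite ltrDl.
    move=> x y; rewrite /cball /= ballEmdist /= => hx hy.
    have hy' : (1 + d) + e <= mdist z y by rewrite leNgt; apply/negP.
    have := metric_triangle z x y; lra.
apply: Ii_aeq.
- by apply: L2_MRI; apply: L2_ind; [apply: cball_meas | exact: (LT HT hf)].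
- apply: L2_MRI; apply: L2_ind; first exact: cball_meas.
  by apply: (LT HT); apply: L2_ind.
move: e1 e2; apply: filterS2 => x; rewrite /mul_ind => h1 h2.
by rewrite h1 mulrDr h2 addr0.
Qed.

Lemma zbound (s0 : R) : 0 <= s0 ->
  (forall z g, L2 g -> (norm2 mu g <= 1)%E ->
     (norm2 mu (mi (cball z 1) (T g)) <= s0%:E)%E) ->
  forall z f, L2 f ->
  (Ii (mi (cball z 1) (T f)) <= (s0 ^+ 2)%:E * Ii (mi (cball z (1 + d)) f))%E.
Proof.
move=> s0ge hS z f hf.
have cv := ball_lim (z:=z) (r:=1 + d) hf.
have cv2 := cvgeZl (y := (s0 ^+ 2)%:E) (fin_numE _) cv.
rewrite -(cvg_lim (@ereal_hausdorff R) cv2).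
apply: lime_ge; first by apply/cvg_ex; eexists; exact: cv2.
apply: nearW => n.
have en : 0 < (n.+1%:R : R)^-1 by rewrite invr_gt0.
rewrite (local_eq z en hf).
have hU : L2 (mi (ball z ((1 + d) + (n.+1%:R)^-1)) f) by apply: L2_ind => //; apply: ball_meas.
have hK := Kbound HT (cball_meas z 1) s0ge (hS z) hU.
have hA : L2 (mi (cball z 1) (T (mi (ball z ((1 + d) + (n.+1%:R)^-1)) f))).
  by apply: L2_ind; [apply: cball_meas | exact: (LT HT hU)].
by rewrite (L2_fin hA) (L2_fin hU) -EFinM lee_fin.
Qed.
End S.

End H8.
Import H8.

Module H9.
Unset Implicit Arguments.
Set Strict Implicit.
Set Implicit Arguments.
Unset Strict Implicit.

Lemma finite_list (U : choiceType) (P : U -> Prop) (K : nat) :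
  (forall s : seq U, uniq s -> (forall z, z \in s -> P z) -> (size s <= K)%N) ->
  exists s : seq U, uniq s /\ (forall z, z \in s <-> P z).
Proof.
move=> hK.
pose Q := fun k => `[< exists s : seq U, [/\ uniq s, (forall z, z \in s -> P z) & size s = k] >].
have ex0 : exists k, Q k by exists 0%N; apply/asboolP; exists [::].
have ub : forall k, Q k -> (k <= K)%N.
  by move=> k /asboolP [s [us hs <-]]; apply: hK.
case: (ex_maxnP ex0 ub) => k /asboolP [s [us hs sk]] hmax.
exists s; split => // z; split; first exact: hs.
move=> Pz; apply/negPn/negP => zs.
have : Q k.+1.
  apply/asboolP; exists (z :: s); split => //=; first by rewrite zs.
  - by move=> w; rewrite inE => /orP [/eqP -> | /hs].
  - by rewrite sk.
by move/hmax; rewrite ltnn.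
Qed.

Lemma sum_ge_term (R : realType) (I : eqType) (s : seq I) (F : I -> R) j :
  j \in s -> uniq s -> (forall i, 0 <= F i) -> F j <= \sum_(i <- s) F i.
Proof.
move=> js us F0; rewrite (bigD1_seq j) //= lerDl.
by apply: sumr_ge0 => i _.
Qed.

Section S.
Context (R : realType) (M : metricType R) (x0 : M).
Local Notation B := (Borel x0).
Local Notation mi := (@mul_ind R M x0).
Implicit Types h : B -> R[i].
Context (Z : set M) (N : R -> nat)
  (Hcover : forall x : M, exists2 z, Z z & cball z 1 x)
  (HN : forall (x : M) (r : R), 1 <= r ->
     forall s : seq M, uniq s ->
       (forall z, z \in s -> Z z /\ (cball z r `&` cball x r) !=set0) ->
       (size s <= N r)%N).

Lemma pt1 (n : nat) (L : seq M) : uniq L ->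
  (forall z, z \in L <-> Z z /\ mdist x0 z <= n%:R + 1) ->
  forall h (y : B), sqnormC (mi (cball x0 n%:R) h y) <= \sum_(z <- L) sqnormC (mi (cball z 1) h y).
Proof.
move=> uL hL h y.
rewrite sqnorm_ind indicE.
case: (boolP (y \in _)) => hy; last first.
  by rewrite mul0r; apply: sumr_ge0 => i _; apply: sqnormC_ge0.
have {}hy : mdist x0 y <= n%:R by move: hy; rewrite inE.
case: (Hcover y) => z Zz hz.
have zL : z \in L.
  apply/hL; split => //.
  have := metric_triangle x0 y z; rewrite (metric_sym y z).
  rewrite /cball /= in hz; lra.
apply: le_trans (sum_ge_term (F := fun i => sqnormC (mi (cball i 1) h y)) zL uL (fun i => @sqnormC_ge0 R _)).
rewrite sqnorm_ind indicE mem_set ?mul1r //.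
Qed.

Lemma pt2 (D : R) : 1 <= D -> forall (L : seq M), uniq L -> (forall z, z \in L -> Z z) ->
  forall h (y : B), \sum_(z <- L) sqnormC (mi (cball z D) h y) <= (N D)%:R * sqnormC (h y).
Proof.
move=> hD L uL hLZ h y.
have -> : \sum_(z <- L) sqnormC (mi (cball z D) h y) =
   (\sum_(z <- L) (\1_(cball z D) y : R)) * sqnormC (h y).
  by rewrite mulr_suml; apply: eq_bigr => z _; rewrite sqnorm_ind.
rewrite ler_wpM2r ?sqnormC_ge0 //.
set b := fun z : M => `[< cball z D y >].
have -> : \sum_(z <- L) (\1_(cball z D) y : R) = (count b L)%:R.
  rewrite -sumn_count sumnE big_map natr_sum; apply: eq_bigr => z _.
  rewrite indicE /b; case: (boolP `[< _ >]) => /asboolP hb.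
    by rewrite mem_set.
  by rewrite memNset.
rewrite ler_nat -size_filter; apply: (@HN y D hD).
  exact: filter_uniq.
move=> z; rewrite mem_filter => /andP [/asboolP hb zL]; split; first exact: hLZ.
exists y; split => //; rewrite /cball /= mdistxx; lra.
Qed.
End S.

End H9.
Import H9.

Module H10.
Unset Implicit Arguments.
Set Strict Implicit.
Set Implicit Arguments.
Unset Strict Implicit.

Section S.
Context (R : realType) (M : metricType R) (x0 : M)
  (mu : {measure set (Borel x0) -> \bar R}).
Local Notation B := (Borel x0).
Local Notation mi := (@mul_ind R M x0).
Local Notation L2 := (@L2 R M x0 mu).
Local Notation Ii := (@Ii R M x0 mu).
Local Notation sqf := (@sqf R M x0).
Implicit Types f g h : B -> R[i].
Context (Z : set M) (N : R -> nat)
  (Hcover : forall x : M, exists2 z, Z z & cball z 1 x)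
  (HN : forall (x : M) (r : R), 1 <= r ->
     forall s : seq M, uniq s ->
       (forall z, z \in s -> Z z /\ (cball z r `&` cball x r) !=set0) ->
       (size s <= N r)%N).

Lemma msqf_ind (A : set M) h : measurable (A : set B) -> MRI h -> measurable_fun setT (sqf (mi A h)).
Proof. by move=> mA hm; apply: MRI_sqf; apply: MRI_ind. Qed.

Lemma step_n (K D : R) f (Tf : B -> R[i]) (n : nat) : 0 <= K -> 1 <= D ->
  L2 f -> L2 Tf ->
  (forall z, (Ii (mi (cball z 1) Tf) <= K%:E * Ii (mi (cball z D) f))%E) ->
  (Ii (mi (cball x0 n%:R) Tf) <= (K * (N D)%:R)%:E * Ii f)%E.
Proof.
move=> K0 hD hf hTf hz.
have [L [uL hL]] : exists L : seq M, uniq L /\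
    (forall z, z \in L <-> Z z /\ mdist x0 z <= n%:R + 1).
  apply: (@finite_list _ _ (N (n%:R + 1))) => s us hs.
  apply: (@HN x0 (n%:R + 1)); first by rewrite lerDr.
  - exact: us.
  move=> z /hs [Zz hz0]; split => //; exists z; split.
  + by rewrite /cball /= mdistxx ler_wpDl.
  + exact: hz0.
have mTf := L2_MRI hTf; have mf := L2_MRI hf.
apply: (@le_trans _ _ (\int[mu]_x (\sum_(z <- L) sqf (mi (cball z 1) Tf) x))%E).
  apply: ge0_le_integral => //.
  - by move=> x _; apply: sqf_ge0.
  - by apply: msqf_ind => //; apply: cball_meas.
  - by apply: emeasurable_sum => z; apply: msqf_ind => //; apply: cball_meas.
  move=> x _; rewrite /H3.sqf sumEFin lee_fin.
  exact: (pt1 Hcover uL hL).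
rewrite ge0_integral_sum //; last first.
  - by move=> z x _; apply: sqf_ge0.
  - by move=> z; apply: msqf_ind => //; apply: cball_meas.
apply: (@le_trans _ _ (\sum_(z <- L) (K%:E * Ii (mi (cball z D) f)))%E).
  by apply: lee_sum => z _; apply: hz.
rewrite -ge0_sume_distrr; last by move=> z _; apply: Ii_ge0.
rewrite EFinM -muleA; apply: lee_wpmul2l; first by rewrite lee_fin.
rewrite /H3.Ii -ge0_integral_sum //; last first.
  - by move=> z x _; apply: sqf_ge0.
  - by move=> z; apply: msqf_ind => //; apply: cball_meas.
rewrite -ge0_integralZl_EFin //; last first.
  - exact: (L2_meas hf).
  - by move=> x _; apply: sqf_ge0.
apply: ge0_le_integral => //.
- by move=> x _; rewrite sumEFin lee_fin; apply: sumr_ge0 => z _; apply: sqnormC_ge0.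
- by apply: emeasurable_sum => z; apply: msqf_ind => //; apply: cball_meas.
- by apply: measurable_funeM; apply: (L2_meas hf).
move=> x _; rewrite /H3.sqf sumEFin -EFinM lee_fin.
by apply: (pt2 HN hD uL) => z /hL [].
Qed.
End S.

End H10.
Import H10.

Module H11.
Unset Implicit Arguments.
Set Strict Implicit.
Set Implicit Arguments.
Unset Strict Implicit.

Section S.
Context (R : realType) (M : metricType R) (x0 : M)
  (mu : {measure set (Borel x0) -> \bar R}).
Local Notation B := (Borel x0).
Local Notation mi := (@mul_ind R M x0).
Local Notation L2 := (@L2 R M x0 mu).
Local Notation Ii := (@Ii R M x0 mu).
Local Notation sqf := (@sqf R M x0).
Implicit Types f g h : B -> R[i].

Lemma mono_lim h (C : \bar R) : MRI h ->
  (forall n : nat, (Ii (mi (cball x0 n%:R) h) <= C)%E) -> (Ii h <= C)%E.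
Proof.
move=> hm hC.
have h1 : forall n, measurable_fun setT (sqf (mi (cball x0 n%:R) h)).
  by move=> n; apply: MRI_sqf; apply: MRI_ind => //; apply: cball_meas.
have h2 : forall n x, setT x -> (0 <= sqf (mi (cball x0 n%:R) h) x)%E.
  by move=> n x _; apply: sqf_ge0.
have h3 : forall x, setT x -> {homo (fun n => sqf (mi (cball x0 n%:R) h))^~ x : n m / (n <= m)%N >-> (n <= m)%E}.
  move=> x _ n m nm; rewrite /H3.sqf lee_fin !sqnorm_ind !indicE.
  case: (boolP (x \in cball x0 n%:R)) => hx.
    have hx' : cball x0 m%:R x.
      move: hx; rewrite inE /cball /= => hx; apply: (le_trans hx).
      by rewrite ler_nat.
    by rewrite (mem_set hx').
  by rewrite mul0r mulr_ge0 ?sqnormC_ge0 //; case: (_ \in _).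
have cv := @cvg_monotone_convergence _ B R mu setT measurableT
  (fun n => sqf (mi (cball x0 n%:R) h)) h1 h2 h3.
have el : (fun x => limn ((fun n => sqf (mi (cball x0 n%:R) h))^~ x)) = sqf h.
  apply/funext => x; apply: (cvg_lim (@ereal_hausdorff R)).
  apply: cvg_near_cst.
  move: (nbhs_infty_ge (Num.Def.trunc (mdist x0 x)).+1); apply: filterS => n hn.
  rewrite /H3.sqf /mul_ind.
  have hx : cball x0 n%:R x.
    rewrite /cball /=; apply: ltW; apply: (lt_le_trans (truncnS_gt _)).
    by rewrite ler_nat.
  by rewrite indicE (mem_set hx) mul1r.
rewrite el in cv.
change (\int[mu]_x sqf h x <= C)%E.
rewrite -(cvg_lim (@ereal_hausdorff R) cv).
apply: lime_le; first by apply/cvg_ex; eexists; exact: cv.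
by apply: nearW => n; apply: hC.
Qed.
End S.

End H11.
Import H11.

Unset Implicit Arguments.
Set Strict Implicit.

Lemma esqrt_ge0 (R : realType) (e : \bar R) : (0 <= esqrt e)%E.
Proof. by case: e => [r||] //=; rewrite lee_fin sqrtr_ge0. Qed.

Theorem lemma3p6 (R : realType) (M : metricType R) (x0 : M)
  (mu : {measure set (Borel x0) -> \bar R})
  (Hproper : proper_space M)
  (Hnoncompact : ~ compact [set: M])
  (Hradon : radon mu)
  (Hsupp : full_support mu)
  (Hpos : forall (x : M) (r : R), 0 < r -> (0 < mu (cball x r))%E)
  (Hsupfin : forall r : R, 0 < r ->
     (ereal_sup [set mu (cball x r) | x in [set: M]] < +oo)%E)
  (Hinf : (0 < ereal_inf [set mu (cball x (1 / 2)) | x in [set: M]])%E)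
  (Z : set M) (N : R -> nat)
  (Hcover : forall x : M, exists2 z, Z z & cball z 1 x)
  (HN : forall (x : M) (r : R), 1 <= r ->
     forall s : seq M, uniq s ->
       (forall z, z \in s -> Z z /\ (cball z r `&` cball x r) !=set0) ->
       (size s <= N r)%N)
  (T : (Borel x0 -> R[i]) -> (Borel x0 -> R[i]))
  (HT : bounded_op mu T) (HTc : controlled mu T) :
  (opnorm mu T <=
     (Num.sqrt (N (prop_d mu T + 1))%:R)%:E *
     ereal_sup [set opnorm mu (fun f => mul_ind (cball x 1) (T f)) | x in [set: M]])%E.
Proof.
set d := prop_d mu T.
set D := d + 1.
have d0 : 0 <= d by apply: (d_ge0 HTc).
have hD : 1 <= D by rewrite /D; lra.
have N1 : (1 <= N D)%N.
  case: (Hcover x0) => z Zz hz.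
  apply: (@HN x0 D hD [:: z]) => // w; rewrite inE => /eqP ->; split => //.
  exists x0; split.
  - by rewrite /cball /= in hz *; lra.
  - by rewrite /cball /= mdistxx; lra.
have sN : 0 < Num.sqrt (N D)%:R :> R by rewrite sqrtr_gt0 ltr0n.
set S := ereal_sup _.
have op0 : forall z : M, (0 <= opnorm mu (fun f => mul_ind (cball z 1) (T f)))%E.
  move=> z; apply: le_ereal_sup_tmp.
  exists (norm2 mu (mul_ind (cball z 1) (T (fun _ => 0)))); last exact: esqrt_ge0.
  exists (fun _ => 0) => //; split; first exact: L2_0.
  rewrite /norm2 (_ : (fun x => _) = (fun _ => 0%E)); last first.
    by apply/funext => x; rewrite sqnormC0.
  by rewrite integral0 /= sqrtr0.
have S0 : (0 <= S)%E.
  by apply: le_trans (op0 x0) _; apply: ereal_sup_ubound; exists x0.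
case hS : S => [s0| |]; last by move: S0; rewrite hS.
  2: by rewrite mulry gtr0_sg // mul1e leey.
have s00 : 0 <= s0 by rewrite -lee_fin -hS.
have hSb : forall z g, L2 mu g -> (norm2 mu g <= 1)%E ->
    (norm2 mu (mul_ind (cball z 1) (T g)) <= s0%:E)%E.
  move=> z g hg hn; rewrite -hS.
  apply: le_trans (_ : opnorm mu (fun f => mul_ind (cball z 1) (T f)) <= S)%E.
    by apply: ereal_sup_ubound; exists g.
  by apply: ereal_sup_ubound; exists z.
apply/ereal_supP => y [f [hf hn] <-].
have hTf := LT HT hf.
have key : (Ii mu (T f) <= (s0 ^+ 2 * (N D)%:R)%:E * Ii mu f)%E.
  apply: mono_lim; first exact: (L2_MRI hTf).
  move=> n; apply: step_n => //.
  - by rewrite sqr_ge0.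
  move=> z; rewrite /D addrC; exact: (zbound HT HTc s00 hSb z hf).
rewrite (normK hTf) -EFinM lee_fin.
have cf : fine (Ii mu f) <= 1.
  move: hn; rewrite (normK hf) lee_fin -{1}sqrtr1 ler_sqrt //.
move: key; rewrite (L2_fin hTf) (L2_fin hf) -EFinM lee_fin => key.
have : fine (Ii mu (T f)) <= s0 ^+ 2 * (N D)%:R.
  apply: (le_trans key); rewrite ler_piMr //.
  by rewrite mulr_ge0 ?sqr_ge0 ?ler0n.
rewrite /= -ler_sqrt; last by rewrite mulr_ge0 ?sqr_ge0 ?ler0n.
move=> h; apply: (le_trans h).
by rewrite sqrtrM ?sqr_ge0 // sqrtr_sqr ger0_norm // mulrC.
Qed.
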